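(* Let $H$ be the graph on vertex set $\{0,1,\dots,10\}$ in which $i,j$ are adjacent iff $1\le|i-j|\le3$. Suppose the edges of $H$ are colored red/blue with no red cycle of length $3$, $4$ or $5$, and at least one of the edges $\{0,1\},\{0,2\},\{0,3\}$ is blue. Then there exist $k\in\{1,\dots,9\}$ and a blue path $P_B$ in $H[\{0,\dots,k\}]$ with endpoints $0$ and $k$ such that at least one edge $\{k,k+j\}$ with $j\in\{1,2,3\}$, $k+j\le 10$, is blue, and $|V(P_B)\cap\{1,\dots,k\}|/k\ge 1/3$. As a consequence, for every $n\ge 2$, every red/blue coloring of $P_{3n+5}^3$ with no red cycle contains a blue path on $n$ vertices, so $\hat{R}(\mathcal{C},P_n)\le 9n+O(1)$.
   Context: $P_N^3$ is the graph on vertex set $\{1,\dots,N\}$ in which $i,j$ are adjacent iff $1\le|i-j|\le3$. $\hat{R}(\mathcal{C},P_n)$ is the minimum number of edges of a graph $G$ such that every red/blue coloring of $E(G)$ contains a red cycle or a blue path on $n$ vertices. *)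

(* Defs.v *)
From mathcomp Require Import all_boot.
Set Implicit Arguments. Unset Strict Implicit. Unset Printing Implicit Defensive.

Definition p3adj (N : nat) : rel 'I_N :=
  fun i j => (i != j) && (val i <= val j + 3) && (val j <= val i + 3).

(* A red/blue colouring of the edges of a graph on T is a map
   c : {set T} -> bool evaluated on the edge {u,v} = [set u; v];
   true = red, false = blue. *)
Definition red_rel (T : finType) (e : rel T) (c : {set T} -> bool) : rel T :=
  fun u v => e u v && c [set u; v].
Definition blue_rel (T : finType) (e : rel T) (c : {set T} -> bool) : rel T :=
  fun u v => e u v && ~~ c [set u; v].

Definition is_cycle_in (T : finType) (r : rel T) (s : seq T) : bool :=
  [&& 3 <= size s, uniq s & cycle r s].

(* x :: p is a path (on size p + 1 distinct vertices) all of whose edges satisfy r *)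
Definition is_path_in (T : finType) (r : rel T) (x : T) (p : seq T) : bool :=
  uniq (x :: p) && path r x p.

Definition n_edges (T : finType) (e : rel T) : nat :=
  #|[set E : {set T} | [exists u, exists v, e u v && (E == [set u; v])]]|.

(* Main.v *)
Require Import Defs.
From mathcomp Require Import all_boot.
From mathcomp Require Import zify.
From Stdlib Require Import Classical.
Set Implicit Arguments. Unset Strict Implicit. Unset Printing Implicit Defensive.

Inductive tree := LNo | LCyc of seq nat | LWit of nat & seq nat & nat
  | Nd of nat & nat & tree & tree.

Definition io (n : nat) : 'I_11 :=
  (if n < 11 as b return (n < 11) = b -> 'I_11 then fun h => Ordinal h else fun _ => ord0) (erefl _).
Definition has_fact (asg : seq ('I_11 * 'I_11 * bool)) u v b :=
  ((u, v, b) \in asg) || ((v, u, b) \in asg).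
Definition radj asg b : rel 'I_11 := fun u v => p3adj u v && has_fact asg u v b.

Definition wit_ok asg (k : nat) (x : 'I_11) (p : seq 'I_11) :=
  [&& val x == 0, val (last x p) == k, uniq (x :: p), path (radj asg false) x p,
      all (fun z : 'I_11 => val z <= k) (x :: p),
      has (fun w : 'I_11 => (k < val w <= k + 3) && radj asg false (last x p) w) (map io (iota 0 11))
    & k <= 3 * count (fun w : 'I_11 => 1 <= val w <= k) (x :: p)].

Fixpoint chk asg (t : tree) : bool :=
  match t with
  | LNo => [&& has_fact asg (io 0) (io 1) true, has_fact asg (io 0) (io 2) true
             & has_fact asg (io 0) (io 3) true]
  | LCyc s => let s' := map io s in
     [&& 3 <= size s' <= 5, uniq s' & cycle (radj asg true) s']
  | LWit k l _ => (1 <= k <= 9) &&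
     match map io l with x :: p => wit_ok asg k x p | nil => false end
  | Nd i j t1 t2 => chk ((io i, io j, true) :: asg) t1 && chk ((io i, io j, false) :: asg) t2
  end.

Definition inv (c : {set 'I_11} -> bool) (asg : seq ('I_11 * 'I_11 * bool)) :=
  forall u v b, (u, v, b) \in asg -> c [set u; v] = b.

Lemma has_factP c asg u v b : inv c asg -> has_fact asg u v b -> c [set u; v] = b.
Proof.
move=> H /orP[] /H //; by rewrite setUC.
Qed.

Definition Concl (c : {set 'I_11} -> bool) :=
     exists k : nat, (1 <= k <= 9) /\
       exists (x : 'I_11) (p : seq 'I_11),
         [/\ val x = 0, val (last x p) = k,
             is_path_in (blue_rel (@p3adj 11) c) x p,
             all (fun w : 'I_11 => val w <= k) (x :: p) &
             (exists w : 'I_11, (k < val w <= k + 3) &&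
                                blue_rel (@p3adj 11) c (last x p) w) /\
             k <= 3 * count (fun w : 'I_11 => 1 <= val w <= k) (x :: p)].

Definition GoalP (c : {set 'I_11} -> bool) :=
  (exists s, 3 <= size s <= 5 /\ is_cycle_in (red_rel (@p3adj 11) c) s) \/
  (forall u v : 'I_11, val u = 0 -> 1 <= val v <= 3 -> ~~ blue_rel (@p3adj 11) c u v) \/
  Concl c.

Lemma io_val (u : 'I_11) : val u = 0 -> u = io 0.
Proof. by move=> h; apply: val_inj; rewrite /= h. Qed.

Lemma chk_sound c t : forall asg, inv c asg -> chk asg t -> GoalP c.
Proof.
elim: t => [|s|k l w|i j t1 IH1 t2 IH2] asg Hi /=.
- case/and3P=> /(has_factP Hi) h1 /(has_factP Hi) h2 /(has_factP Hi) h3.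
  right; left => u v /io_val -> /andP[v1 v3]; rewrite /blue_rel negb_and negbK; apply/orP; right.
  have [->|[->|->]] : v = io 1 \/ v = io 2 \/ v = io 3.
    move: v1 v3; case: v => [[|[|[|[|m]]]] Hm] //= _ _.
    + by left; apply/val_inj.
    + by right; left; apply/val_inj.
    + by right; right; apply/val_inj.
  1-3: by rewrite ?h1 ?h2 ?h3.
- case/and3P=> Hs Hu Hc; left; exists (map io s); split => //.
  rewrite /is_cycle_in Hu (leq_trans _ (proj1 (andP Hs))) //=.
  apply: sub_cycle Hc => u v /andP[Ha /(has_factP Hi) Hf].
  by rewrite /red_rel Ha Hf.
- case/andP=> Hk; case: (map io l) => // x p.
  case/and5P=> /eqP H0 /eqP Hl Hu Hp /and3P[Ha /hasP[z _ /andP[Hz Hzr]] Hcnt].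
  right; right; exists k; split=> //; exists x, p; split=> //.
  + rewrite /is_path_in Hu /=; apply: sub_path Hp => u v /andP[Ha' /(has_factP Hi) Hf].
    by rewrite /blue_rel Ha' Hf.
  + split=> //; exists z; move: Hzr => /andP[Ha' /(has_factP Hi) Hf].
    by rewrite Hz /blue_rel Ha' Hf.
- case Hc: (c [set io i; io j]) => /andP[h1 h2].
  + apply: (IH1 _ _ h1) => u v b; rewrite inE => /orP[/eqP[-> -> ->]//|]; exact: Hi.
  + apply: (IH2 _ _ h2) => u v b; rewrite inE => /orP[/eqP[-> -> ->]//|]; exact: Hi.
Qed.
Definition the_tree : tree :=
  (Nd 0 1 (Nd 0 2 (Nd 1 2 (LCyc [:: 0; 1; 2]) (Nd 0 3 LNo (Nd 1 3 (Nd 2 3 (LCyc [:: 0; 1; 3; 2]) (Nd 1 4 (Nd 2 4 (LCyc [:: 0; 1; 4; 2]) (Nd 3 4 (LCyc [:: 1; 3; 4]) (LWit 3 [:: 0; 3] 4))) (Nd 2 4 (Nd 3 4 (LCyc [:: 0; 1; 3; 4; 2]) (LWit 3 [:: 0; 3] 4)) (Nd 3 4 (Nd 2 5 (Nd 3 5 (LCyc [:: 0; 1; 3; 5; 2]) (LWit 3 [:: 0; 3] 5)) (Nd 3 5 (Nd 4 5 (LCyc [:: 3; 4; 5]) (LWit 4 [:: 0; 3; 2; 1; 4] 5)) (LWit 3 [:: 0; 3] 5))) (LWit 3 [:: 0; 3] 4))))) (Nd 2 3 (Nd 1 4 (Nd 2 4 (LCyc [:: 0; 1; 4; 2]) (Nd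 3 4 (LCyc [:: 0; 1; 4; 3; 2]) (LWit 3 [:: 0; 3] 4))) (Nd 2 4 (Nd 3 4 (LCyc [:: 2; 3; 4]) (LWit 3 [:: 0; 3] 4)) (Nd 3 4 (Nd 2 5 (Nd 3 5 (LCyc [:: 2; 3; 5]) (LWit 3 [:: 0; 3] 5)) (Nd 3 5 (Nd 4 5 (LCyc [:: 3; 4; 5]) (LWit 4 [:: 0; 3; 1; 2; 4] 5)) (LWit 3 [:: 0; 3] 5))) (LWit 3 [:: 0; 3] 4)))) (Nd 1 4 (Nd 2 4 (LCyc [:: 0; 1; 4; 2]) (Nd 3 4 (Nd 2 5 (Nd 3 5 (Nd 4 5 (LCyc [:: 0; 1; 4; 5; 2]) (LWit 4 [:: 0; 3; 1; 2; 4] 5)) (LWit 3 [:: 0; 3] 5)) (Nd 3 5 (Nd 4 5 (LCyc [:: 3; 4; 5]) (LWit 4 [:: 0; 3; 1; 2; 4] 5)) (LWit 3 [:: 0; 3] 5))) (LWit 3 [:: 0; 3] 4))) (Nd 2 4 (Nd 3 4 (Nd 2 5 (Nd 3 5 (LCyc [:: 2; 4; 3; 5]) (LWit 3 [:: 0; 3] 5)) (Nd 3 5 (Nd 4 5 (LCyc [:: 3; 4; 5]) (LWit 4 [:: 0; 3; 1; 4] 5)) (LWit 3 [:: 0; 3] 5))) (LWit 3 [:: 0; 3] 4)) (Nd 3 4 (Nd 2 5 (Nd 3 5 (Nd 4 5 (LCyc [:: 3; 4; 5]) (LWit 4 [:: 0; 3; 1; 2; 4] 5)) (LWit 3 [::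 0; 3] 5)) (Nd 3 5 (Nd 4 5 (LCyc [:: 3; 4; 5]) (LWit 4 [:: 0; 3; 1; 2; 4] 5)) (LWit 3 [:: 0; 3] 5))) (LWit 3 [:: 0; 3] 4)))))))) (Nd 1 2 (Nd 0 3 (Nd 1 3 (LCyc [:: 0; 1; 3]) (Nd 2 3 (LCyc [:: 0; 1; 2; 3]) (LWit 2 [:: 0; 2] 3))) (Nd 1 3 (Nd 2 3 (LCyc [:: 1; 2; 3]) (LWit 2 [:: 0; 2] 3)) (Nd 2 3 (Nd 1 4 (Nd 2 4 (LCyc [:: 1; 2; 4]) (LWit 2 [:: 0; 2] 4)) (Nd 2 4 (Nd 3 4 (LCyc [:: 2; 3; 4]) (LWit 3 [:: 0; 3] 4)) (LWit 2 [:: 0; 2] 4))) (LWit 2 [:: 0; 2] 3)))) (Nd 0 3 (Nd 1 3 (LCyc [:: 0; 1; 3]) (Nd 2 3 (Nd 1 4 (Nd 2 4 (LCyc [:: 0; 1; 4; 2; 3]) (LWit 2 [:: 0; 2] 4)) (Nd 2 4 (Nd 3 4 (LCyc [:: 2; 3; 4]) (LWit 3 [:: 0; 2; 1; 3] 4)) (LWit 2 [:: 0; 2] 4))) (LWit 2 [:: 0; 2] 3))) (Nd 1 3 (Nd 2 3 (Nd 1 4 (Nd 2 4 (LCyc [:: 1; 3; 2; 4]) (LWit 2 [:: 0; 2] 4)) (Nd 2 4 (Nd 3 4 (LCyc [:: 2; 3; 4]) (LWit 3 [:: 0; 3] 4)) (LWit 2 [:: 0; 2] 4))) (LWit 2 [::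 0; 2] 3)) (Nd 2 3 (Nd 1 4 (Nd 2 4 (Nd 3 4 (LCyc [:: 2; 3; 4]) (LWit 3 [:: 0; 2; 1; 3] 4)) (LWit 2 [:: 0; 2] 4)) (Nd 2 4 (Nd 3 4 (LCyc [:: 2; 3; 4]) (LWit 3 [:: 0; 2; 1; 3] 4)) (LWit 2 [:: 0; 2] 4))) (LWit 2 [:: 0; 2] 3)))))) (Nd 0 2 (Nd 1 2 (Nd 0 3 (Nd 1 3 (LCyc [:: 0; 2; 1; 3]) (LWit 1 [:: 0; 1] 3)) (Nd 1 3 (Nd 2 3 (LCyc [:: 1; 2; 3]) (Nd 1 4 (Nd 2 4 (LCyc [:: 1; 2; 4]) (Nd 3 4 (LCyc [:: 1; 3; 4]) (LWit 3 [:: 0; 3] 4))) (LWit 1 [:: 0; 1] 4))) (LWit 1 [:: 0; 1] 3))) (LWit 1 [:: 0; 1] 2)) (Nd 1 2 (Nd 0 3 (Nd 1 3 (Nd 2 3 (LCyc [:: 1; 2; 3]) (LWit 2 [:: 0; 2] 3)) (LWit 1 [:: 0; 1] 3)) (Nd 1 3 (Nd 2 3 (LCyc [:: 1; 2; 3]) (LWit 2 [:: 0; 2] 3)) (LWit 1 [:: 0; 1] 3))) (LWit 1 [:: 0; 1] 2)))).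
Lemma tree_ok : chk [::] the_tree.
Proof. vm_compute. reflexivity. Qed.

Lemma part1 : forall c : {set 'I_11} -> bool,
     (forall s : seq 'I_11,
        3 <= size s <= 5 -> ~~ is_cycle_in (red_rel (@p3adj 11) c) s) ->
     (exists u v : 'I_11, [/\ val u = 0, 1 <= val v <= 3 &
                            blue_rel (@p3adj 11) c u v]) -> Concl c.
Proof.
move=> c H1 H2; case: (chk_sound (t := the_tree) (asg := [::]) (c := c) _ tree_ok).
- by [].
- case=> s [hs hc]; by move: (H1 s hs); rewrite hc.
case=> // H; case: H2 => u [v [hu hv hb]]; by move: (H u v hu hv); rewrite hb.
Qed.

Lemma ordval n (i : 'I_n) : \val i = nat_of_ord i. Proof. by []. Qed.
Ltac keep_arith := repeat match goal with
 | H : ?T |- _ => match type of T with Prop => lazymatch T with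
    | is_true (leq _ _) => fail
    | @eq nat _ _ => fail
    | is_true (negb (@eq_op _ _ _)) => fail
    | is_true (andb _ _) => fail
    | _ => clear H end end end.
Ltac slia := keep_arith; simpl in *; lia.

Lemma shf_proof N k (hk : k + 10 < N) (x : 'I_11) : x + k < N.
Proof. have h := ltn_ord x; slia. Qed.

Definition shf N k (hk : k + 10 < N) (x : 'I_11) : 'I_N := Ordinal (shf_proof hk x).

Lemma shf_inj N k (hk : k + 10 < N) : injective (shf hk).
Proof. move=> a b /(congr1 val) /= h; apply: val_inj => /=; slia. Qed.

Lemma shf_adj N k (hk : k + 10 < N) u v : p3adj (shf hk u) (shf hk v) = p3adj u v.
Proof.
rewrite /p3adj (inj_eq (@shf_inj N k hk)) /=.
by rewrite [val v + k + 3]addnAC [val u + k + 3]addnAC !leq_add2r.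
Qed.

Definition wc N (c : {set 'I_N} -> bool) k (hk : k + 10 < N) : {set 'I_11} -> bool :=
  fun S => c (shf hk @: S).

Lemma wc_red N c k (hk : k + 10 < N) u v :
  red_rel (@p3adj 11) (wc c hk) u v = red_rel (@p3adj N) c (shf hk u) (shf hk v).
Proof. by rewrite /red_rel /wc shf_adj imsetU1 imset_set1. Qed.
Lemma wc_blue N c k (hk : k + 10 < N) u v :
  blue_rel (@p3adj 11) (wc c hk) u v = blue_rel (@p3adj N) c (shf hk u) (shf hk v).
Proof. by rewrite /blue_rel /wc shf_adj imsetU1 imset_set1. Qed.

Definition Inv N (c : {set 'I_N} -> bool) k :=
  exists (x : 'I_N) p (w : 'I_N), [/\ is_path_in (blue_rel (@p3adj N) c) x p,
     val (last x p) = k, all (fun z : 'I_N => val z <= k) (x :: p),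
     k <= 3 * size p + 1 & (k < val w <= k + 3) && blue_rel (@p3adj N) c (last x p) w].

Lemma step N (c : {set 'I_N} -> bool)
  (noc : forall s, ~~ is_cycle_in (red_rel (@p3adj N) c) s) k :
  k + 10 < N -> Inv c k -> exists k', k < k' /\ Inv c k'.
Proof.
move=> hk [x [p [w [/andP[Hu Hp] Hl Ha Hs /andP[/andP[Hw1 Hw2] Hb]]]]].
have hv : val w - k < 11.
  slia.
pose v : 'I_11 := Ordinal hv.
have Hsv : shf hk v = w.
  apply: val_inj; rewrite /= /v /=; slia.
have Hs0 : shf hk ord0 = last x p by apply: val_inj => /=; rewrite Hl.
have [] := @part1 (wc c hk).
- move=> s hs; apply/negP => /and3P[h3 hu hc].
  move: (noc (map (shf hk) s)); rewrite /is_cycle_in size_map h3 map_inj_uniq ?hu;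
    last exact: shf_inj.
  rewrite cycle_map (sub_cycle _ hc) // => a b; by rewrite wc_red.
- exists ord0, v; split => //; first by rewrite /=; slia.
  by rewrite wc_blue Hsv Hs0.
move=> k' [hk' [x' [p' [hx' hl' /andP[hu' hp'] ha' [[w' /andP[hw' hb']] hc']]]]].
have Ex' : x' = ord0 by apply: val_inj.
subst x'.
exists (k + k'); split; first by slia.
exists x, (p ++ map (shf hk) p'), (shf hk w').
have Hlast : val (last x (p ++ map (shf hk) p')) = k + k'.
  by rewrite last_cat -Hs0 last_map /= hl' addnC.
split => //.
- rewrite /is_path_in -cat_cons cat_uniq Hu map_inj_uniq; last exact: shf_inj.
  move: hu' => /= /andP[hn hu']; rewrite hu' andbT.
  rewrite cat_path Hp -Hs0 path_map /=.
  rewrite (sub_path _ hp') ?andbT; last by move=> a b; rewrite wc_blue.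
  apply/hasPn => y /mapP[z zin ->]; apply/negP => hin.
  have := allP Ha _ hin; rewrite /=.
  have : val z != 0.
    apply/negP => /eqP h0; suff E : z = ord0 by move: hn; rewrite -E zin.
    by apply: val_inj.
  slia.
- rewrite -cat_cons all_cat; apply/andP; split.
    by apply: sub_all Ha => z /= hz; slia.
  rewrite all_map; apply/allP => z zin /=.
  have := allP ha' z; rewrite inE zin orbT => /(_ isT); slia.
- rewrite size_cat size_map.
  have : count (fun w : 'I_11 => 1 <= val w <= k') p' <= size p' by apply: count_size.
  move: hc' => /=; slia.
- apply/andP; split; first by rewrite /=; slia.
  by rewrite last_cat -Hs0 last_map -wc_blue.
Qed.

Lemma loop N (c : {set 'I_N} -> bool)
  (noc : forall s, ~~ is_cycle_in (red_rel (@p3adj N) c) s) :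
  forall m k, N - k <= m -> Inv c k -> exists k', N <= k' + 10 /\ Inv c k'.
Proof.
elim=> [|m IH] k hm hI.
  by exists k; split => //; slia.
case: (leqP N (k + 10)) => h; first by exists k.
have [k' [hk' hI']] := step noc h hI.
apply: (IH k') => //; slia.
Qed.

Lemma take_path_in (T : finType) (r : rel T) x q m :
  is_path_in r x q -> is_path_in r x (take m q).
Proof.
case/andP=> hu hp; apply/andP; split; last exact: take_path.
by have := take_uniq m.+1 hu.
Qed.

Lemma final N (c : {set 'I_N} -> bool) n (hn : 2 <= n) (hN : 3 * n + 5 <= N) k :
  N <= k + 10 -> Inv c k ->
  exists (x : 'I_N) p, size p + 1 = n /\ is_path_in (blue_rel (@p3adj N) c) x p.
Proof.
move=> hk [x [p [w [/andP[Hu Hp] Hl Ha Hs /andP[/andP[Hw1 Hw2] Hb]]]]].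
have Hq : is_path_in (blue_rel (@p3adj N) c) x (rcons p w).
  rewrite /is_path_in -rcons_cons rcons_uniq Hu rcons_path Hp Hb !andbT.
  apply/negP => hin; have := allP Ha _ hin; slia.
exists x, (take n.-1 (rcons p w)); split; last exact: take_path_in.
rewrite size_takel ?size_rcons; slia.
Qed.

Lemma ordP3 N (h1 : 0 < N) (h2 : 1 < N) : p3adj (Ordinal h1) (Ordinal h2).
Proof. by []. Qed.

Lemma base N (c : {set 'I_N} -> bool)
  (noc : forall s, ~~ is_cycle_in (red_rel (@p3adj N) c) s) (hN : 4 <= N) :
  exists k, Inv c k.
Proof.
have h0 : 0 < N by slia.
have h1 : 1 < N by slia.
have h2 : 2 < N by slia.
have h3 : 3 < N by slia.
pose a0 : 'I_N := Ordinal h0.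
pose a1 : 'I_N := Ordinal h1.
pose a2 : 'I_N := Ordinal h2.
pose a3 : 'I_N := Ordinal h3.
case: (boolP [exists v : 'I_N, (0 < val v <= 3) && blue_rel (@p3adj N) c a0 v]).
  case/existsP => v /andP[hv hb]; exists 0, a0, [::], v; split => //.
  by rewrite /= hb andbT add0n.
rewrite negb_exists => /forallP hn.
have e01 : p3adj a0 a1 by []. have e02 : p3adj a0 a2 by [].
have e03 : p3adj a0 a3 by []. have e12 : p3adj a1 a2 by [].
have e20 : p3adj a2 a0 by [].
have r1 : c [set a0; a1] by move: (hn a1); rewrite /blue_rel e01 /= negbK.
have r2 : c [set a0; a2] by move: (hn a2); rewrite /blue_rel e02 /= negbK.
case h12: (c [set a1; a2]).
  have := noc [:: a0; a1; a2]; rewrite /is_cycle_in /= /red_rel e01 e12 e20 r1 h12.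
  by rewrite setUC r2.
exists 1, a1, [::], a2; split => //.
by rewrite /blue_rel e12 h12.
Qed.

Lemma part2gen N n (hn : 2 <= n) (hN : 3 * n + 5 <= N) (c : {set 'I_N} -> bool)
  (noc : forall s, ~~ is_cycle_in (red_rel (@p3adj N) c) s) :
  exists (x : 'I_N) p, size p + 1 = n /\ is_path_in (blue_rel (@p3adj N) c) x p.
Proof.
have h4 : 4 <= N by slia.
have [k hk] := base noc h4.
have [k' [hk' hI]] := loop noc (leqnn (N - k)) hk.
have := final hn hN hk' hI. exact.
Qed.

Lemma p3sym N : symmetric (@p3adj N).
Proof. by move=> u v; rewrite /p3adj eq_sym; case: (v != u) => //=; rewrite andbC. Qed.
Lemma p3irr N : irreflexive (@p3adj N).
Proof. by move=> u; rewrite /p3adj eqxx. Qed.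

Definition gE M (q : 'I_M.+1 * 'I_3) : {set 'I_M.+1} :=
  [set q.1; inord (q.1 + q.2 + 1)].

Lemma edge_in M (u v : 'I_M.+1) : val u < val v <= val u + 3 ->
  [set u; v] \in (@gE M) @: setT.
Proof.
case/andP=> h1 h2.
have hd : val v - val u - 1 < 3 by slia.
apply/imsetP; exists (u, Ordinal hd) => //=; rewrite /gE /=.
congr [set _; _]; apply: val_inj; rewrite /= inordK; have := ltn_ord v; slia.
Qed.

Lemma nedges_le M : n_edges (@p3adj M.+1) <= 3 * M.+1.
Proof.
rewrite /n_edges; apply: (@leq_trans #|(@gE M) @: setT|).
- apply: subset_leq_card; apply/subsetP => E; rewrite inE => /existsP[u /existsP[v /andP[huv /eqP ->]]].
  move: huv; rewrite /p3adj => /andP[/andP[hne h1] h2].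
  case: (ltngtP (val u) (val v)) => h.
  + by apply: edge_in; rewrite h; slia.
  + rewrite setUC; apply: edge_in; rewrite h; slia.
  + by move: hne; rewrite -val_eqE h eqxx.
apply: leq_trans (leq_imset_card _ _) _.
by rewrite cardsT card_prod !card_ord mulnC.
Qed.

Lemma part3 : exists C : nat, forall n : nat, 2 <= n ->
     exists (T : finType) (e : rel T),
       [/\ symmetric e, irreflexive e, n_edges e <= 9 * n + C &
           forall c : {set T} -> bool,
             (exists s : seq T, is_cycle_in (red_rel e c) s) \/
             (exists (x : T) (p : seq T),
                 size p + 1 = n /\ is_path_in (blue_rel e c) x p)].
Proof.
exists 15 => n hn; exists ('I_(3 * n + 4).+1), (@p3adj _); split.
- exact: p3sym.
- exact: p3irr.
- apply: leq_trans (nedges_le _) _; slia.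
move=> c; case: (classic (exists s, is_cycle_in (red_rel (@p3adj _) c) s)) => H.
  by left.
right; have hN : 3 * n + 5 <= (3 * n + 4).+1 by slia.
have noc : forall s, ~~ is_cycle_in (red_rel (@p3adj _) c) s.
  by move=> s; apply/negP => hs; apply: H; exists s.
have [x [p [h1 h2]]] := part2gen hn hN noc.
by exists x, p.
Qed.

Theorem mainTheorem7 :
  (* the finite lemma on H = P_11^3 with vertices 0..10 *)
  (forall c : {set 'I_11} -> bool,
     (forall s : seq 'I_11,
        3 <= size s <= 5 -> ~~ is_cycle_in (red_rel (@p3adj 11) c) s) ->
     (exists u v : 'I_11, [/\ val u = 0, 1 <= val v <= 3 &
                            blue_rel (@p3adj 11) c u v]) ->
     exists k : nat, (1 <= k <= 9) /\
       exists (x : 'I_11) (p : seq 'I_11),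
         [/\ val x = 0, val (last x p) = k,
             is_path_in (blue_rel (@p3adj 11) c) x p,
             all (fun w : 'I_11 => val w <= k) (x :: p) &
             (exists w : 'I_11, (k < val w <= k + 3) &&
                                blue_rel (@p3adj 11) c (last x p) w) /\
             k <= 3 * count (fun w : 'I_11 => 1 <= val w <= k) (x :: p)])
  /\
  (* consequence: colourings of P_{3n+5}^3 *)
  (forall n : nat, 2 <= n ->
     forall c : {set 'I_(3 * n + 5)} -> bool,
       (forall s : seq 'I_(3 * n + 5), ~~ is_cycle_in (red_rel (@p3adj _) c) s) ->
       exists (x : 'I_(3 * n + 5)) (p : seq 'I_(3 * n + 5)),
         size p + 1 = n /\ is_path_in (blue_rel (@p3adj _) c) x p)
  /\
  (* consequence: size-Ramsey bound  \hat R(C, P_n) <= 9n + O(1) *)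
  (exists C : nat, forall n : nat, 2 <= n ->
     exists (T : finType) (e : rel T),
       [/\ symmetric e, irreflexive e, n_edges e <= 9 * n + C &
           forall c : {set T} -> bool,
             (exists s : seq T, is_cycle_in (red_rel e c) s) \/
             (exists (x : T) (p : seq T),
                 size p + 1 = n /\ is_path_in (blue_rel e c) x p)]).
Proof.
split; first exact: part1.
split; last exact: part3.
move=> n hn c noc; apply: part2gen hn _ c noc; exact: leqnn.
Qed.
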